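(* Let $x_0\in(-2,2)$, $0<\alpha<1$ and let $K\subset\{\eta\in\mathbb{C}:\operatorname{Im}\eta>0\}$ be compact. For $N,n\in\mathbb{N}$, $c_1,\dots,c_N\in\mathbb{R}$ and $\eta_1,\dots,\eta_N\in K$ put $\lambda_j=x_0+\eta_j/n^\alpha$ and $\phi^{(n)}=\frac{1}{n^\alpha}\sum_{j=1}^Nc_ja_{\lambda_j}=\sum_{k\in\mathbb{Z}}\phi^{(n)}_kz^k$. Then there exist $d_1,d_2>0$ (depending only on $x_0,\alpha,K$) such that $$|\phi^{(n)}_k|\le\frac{d_1}{n^\alpha}\left(\sum_{j=1}^N|c_j|\right)e^{-d_2|k|/n^\alpha}$$ for all $k\in\mathbb{Z}$, $n,N\in\mathbb{N}$, $\eta_j\in K$, $c_j\in\mathbb{R}$.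
   Context: For $\lambda\in\mathbb{C}\setminus[-2,2]$, $\omega(\lambda)=\frac{\lambda-\sqrt{\lambda^2-4}}{2}$, with the branch making $\omega$ analytic on $\mathbb{C}\setminus[-2,2]$ and $\omega(\lambda)=O(1/\lambda)$ as $\lambda\to\infty$ (so $|\omega(\lambda)|<1$). For $\operatorname{Im}\lambda>0$, $a_\lambda$ is the Laurent series $a_\lambda(z)=\sum_{j\in\mathbb{Z}}\operatorname{Im}\left(\frac{\omega(\lambda)^{|j|}}{\omega(\lambda)-\omega(\lambda)^{-1}}\right)z^j$. *)

(* Defs.v *)
From Stdlib Require Import Reals ZArith Lra.
Open Scope R_scope.

Definition Cx := (R * R)%type.
Definition re (z : Cx) : R := fst z.
Definition im (z : Cx) : R := snd z.
Definition Cadd (z w : Cx) : Cx := (re z + re w, im z + im w).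
Definition Csub (z w : Cx) : Cx := (re z - re w, im z - im w).
Definition Cmul (z w : Cx) : Cx :=
  (re z * re w - im z * im w, re z * im w + im z * re w).
Definition Cinv (z : Cx) : Cx :=
  let d := re z * re z + im z * im z in (re z / d, - im z / d).
Definition Cdiv (z w : Cx) : Cx := Cmul z (Cinv w).
Definition Cscal (r : R) (z : Cx) : Cx := (r * re z, r * im z).
Fixpoint Cpow (z : Cx) (n : nat) : Cx :=
  match n with O => (1, 0) | S m => Cmul z (Cpow z m) end.
Definition Cnorm (z : Cx) : R := sqrt (re z * re z + im z * im z).

(* principal square root (any square root works below, since the branch
   of omega is fixed afterwards by the condition |omega| < 1) *)
Definition Csqrt (z : Cx) : Cx :=
  let r := Cnorm z in
  (sqrt ((r + re z) / 2),
   if Rlt_dec (im z) 0 then - sqrt ((r - re z) / 2) else sqrt ((r - re z) / 2)).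

Definition omega (l : Cx) : Cx :=
  let s := Csqrt (Csub (Cmul l l) (4, 0)) in
  let w1 := Cscal (/2) (Csub l s) in
  let w2 := Cscal (/2) (Cadd l s) in
  if Rlt_dec (Cnorm w1) 1 then w1 else w2.

(* j-th Laurent coefficient of a_lambda *)
Definition a_coef (l : Cx) (j : Z) : R :=
  let w := omega l in
  im (Cdiv (Cpow w (Z.abs_nat j)) (Csub w (Cinv w))).

(* finite sum  sum_{j=0}^{N-1} f j  (indices shifted from 1..N) *)
Fixpoint sumN (N : nat) (f : nat -> R) : R :=
  match N with O => 0 | S M => sumN M f + f M end.

Definition lam (x0 alpha : R) (n : nat) (eta : Cx) : Cx :=
  Cadd (x0, 0) (Cscal (/ Rpower (INR n) alpha) eta).

Definition phi_coef (x0 alpha : R) (n N : nat) (c : nat -> R) (eta : nat -> Cx)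
  (k : Z) : R :=
  / Rpower (INR n) alpha * sumN N (fun j => c j * a_coef (lam x0 alpha n (eta j)) k).

(* compactness in C = R^2: closed and bounded (Heine-Borel) *)
Definition Cclosed (K : Cx -> Prop) : Prop :=
  forall z, ~ K z -> exists eps, 0 < eps /\
    forall w, Cnorm (Csub w z) < eps -> ~ K w.
Definition Cbounded (K : Cx -> Prop) : Prop :=
  exists M, forall z, K z -> Cnorm z <= M.
Definition Ccompact (K : Cx -> Prop) : Prop := Cclosed K /\ Cbounded K.

(* Main.v *)
Require Import Defs.
From Stdlib Require Import Reals ZArith Lra Lia Psatz Classical.
Open Scope R_scope.

Definition N2 (z : Cx) : R := re z * re z + im z * im z.

Lemma N2_ge0 z : 0 <= N2 z.
Proof. unfold N2; nra. Qed.

Lemma N2_mul z w : N2 (Cmul z w) = N2 z * N2 w.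
Proof. destruct z, w; unfold N2, Cmul, re, im; simpl; ring. Qed.

Lemma N2_inv z : N2 z <> 0 -> N2 (Cinv z) = / N2 z.
Proof. destruct z as [a b]; unfold N2, Cinv, re, im; simpl; intros H.
replace (a / (a * a + b * b) * (a / (a * a + b * b)) +
 - b / (a * a + b * b) * (- b / (a * a + b * b))) with ((a*a+b*b)/((a*a+b*b)*(a*a+b*b))) by (field; auto).
field; auto. Qed.

Lemma N2_pow w k : N2 (Cpow w k) = N2 w ^ k.
Proof. induction k; simpl. unfold N2; simpl; ring. rewrite N2_mul, IHk; ring. Qed.

Lemma im_le z : Rabs (im z) <= sqrt (N2 z).
Proof. rewrite <- sqrt_Rsqr_abs. apply sqrt_le_1_alt. unfold N2, Rsqr. nra. Qed.

Lemma exp_pow_nat x k : exp x ^ k = exp (INR k * x).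
Proof. induction k. simpl. rewrite Rmult_0_l, exp_0; auto.
rewrite S_INR. simpl. rewrite IHk, <- exp_plus. f_equal; ring. Qed.

Lemma Csqrt_sq z : let s := Csqrt z in
  re s * re s - im s * im s = re z /\ 2 * re s * im s = im z.
Proof.
destruct z as [a b]. unfold Csqrt, Cnorm, re, im; simpl.
set (r := sqrt (a*a+b*b)).
assert (Hr : 0 <= r) by apply sqrt_pos.
assert (Hr2 : r * r = a*a+b*b) by (apply sqrt_sqrt; nra).
assert (H1 : 0 <= (r + a)/2) by nra.
assert (H2 : 0 <= (r - a)/2) by nra.
assert (E1 := sqrt_sqrt _ H1). assert (E2 := sqrt_sqrt _ H2).
assert (P : sqrt ((r+a)/2) * sqrt ((r-a)/2) = Rabs b / 2).
{ rewrite <- sqrt_mult by auto.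
  replace ((r + a) / 2 * ((r - a) / 2)) with ((Rabs b / 2) * (Rabs b/2)).
  apply sqrt_square. assert (0 <= Rabs b) by apply Rabs_pos. lra.
  replace ((Rabs b / 2) * (Rabs b/2)) with ((Rabs b * Rabs b)/4) by field.
  rewrite <- Rabs_mult, Rabs_right by nra. nra. }
destruct (Rlt_dec b 0).
- rewrite Rabs_left in P by lra. split; nra.
- rewrite Rabs_right in P by lra. split; nra.
Qed.

Definition quad (l w : Cx) : Prop :=
  re l * re w - im l * im w = re w * re w - im w * im w + 1 /\
  re l * im w + im l * re w = 2 * re w * im w.

Lemma Cnorm_N2 z : Cnorm z = sqrt (N2 z).
Proof. reflexivity. Qed.

Lemma omega_prop l : 0 < im l -> quad l (omega l) /\ N2 (omega l) < 1.
Proof.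
intros Hl. destruct l as [l1 l2]. unfold omega.
pose proof (Csqrt_sq (Csub (Cmul (l1, l2) (l1, l2)) (4, 0))) as [S1 S2].
set (s := Csqrt (Csub (Cmul (l1, l2) (l1, l2)) (4, 0))) in *.
destruct s as [s1 s2]. unfold re, im, Csub, Cmul in S1, S2; simpl in S1, S2.
unfold im in Hl; simpl in Hl.
assert (Q1 : quad (l1,l2) (Cscal (/2) (Csub (l1,l2) (s1,s2)))).
{ unfold quad, Cscal, Csub, re, im; simpl. split; nra. }
assert (Q2 : quad (l1,l2) (Cscal (/2) (Cadd (l1,l2) (s1,s2)))).
{ unfold quad, Cscal, Cadd, re, im; simpl. split; nra. }
destruct (Rlt_dec _ 1) as [Hlt|Hge].
- split; [exact Q1|]. rewrite Cnorm_N2 in Hlt.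
  destruct (Rlt_dec (N2 (Cscal (/ 2) (Csub (l1, l2) (s1, s2)))) 1); auto.
  exfalso. apply Rnot_lt_le in n. apply sqrt_le_1_alt in n. rewrite sqrt_1 in n. lra.
- split; [exact Q2|]. rewrite Cnorm_N2 in Hge.
  unfold N2, Cscal, Csub, Cadd, re, im in *; simpl in *.
  set (a := / 2 * (l1 - s1)) in *. set (b := / 2 * (l2 - s2)) in *.
  set (c := / 2 * (l1 + s1)). set (d := / 2 * (l2 + s2)).
  assert (M1 : a * c - b * d = 1) by (unfold a,b,c,d; nra).
  assert (M2 : a * d + b * c = 0) by (unfold a,b,c,d; nra).
  assert (L2 : l2 = b + d) by (unfold b, d; lra).
  assert (G : 1 <= a*a+b*b).
  { destruct (Rlt_dec (a*a+b*b) 1); [|lra]. exfalso; apply Hge.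
    rewrite <- sqrt_1. apply sqrt_lt_1_alt. nra. }
  assert (NE : a*a+b*b <> 1).
  { intro E. assert (d = -b).
    { replace d with (a*(a*d+b*c) - b*(a*c - b*d) + (1 - (a*a+b*b))*d) by ring.
      rewrite M1, M2, E. ring. }
    lra. }
  assert (P : (a*a+b*b)*(c*c+d*d) = 1).
  { replace ((a*a+b*b)*(c*c+d*d)) with ((a*c-b*d)*(a*c-b*d) + (a*d+b*c)*(a*d+b*c)) by ring.
    rewrite M1, M2; ring. }
  nra.
Qed.

Lemma quad_facts l w : quad l w -> 0 < im l -> N2 w < 1 ->
  0 < N2 w /\ sqrt (N2 w) * (2 + im l) <= 2 /\
  N2 (Csub w (Cinv w)) * N2 (Csub w (Cinv w)) =
   ((re l - 2)*(re l - 2) + im l * im l) * ((re l + 2)*(re l + 2) + im l * im l).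
Proof.
destruct l as [l1 l2], w as [a b]. unfold quad, N2, re, im; simpl.
intros [E1 E2] Hl HQ. set (Q := a*a+b*b) in *.
assert (QP : 0 < Q).
{ unfold Q in *. destruct (Req_dec (a*a+b*b) 0). exfalso. assert (a = 0) by nra. assert (b=0) by nra. subst. nra.
  nra. }
assert (F1 : l1 * Q = a * (Q+1)).
{ replace (l1*Q) with (a*(l1*a - l2*b) + b*(l1*b+l2*a)) by (unfold Q; ring).
  rewrite E1, E2. unfold Q; ring. }
assert (F2 : l2 * Q = b * (Q-1)).
{ replace (l2*Q) with (a*(l1*b+l2*a) - b*(l1*a - l2*b)) by (unfold Q; ring).
  rewrite E1, E2. unfold Q; ring. }
assert (Iv : Cinv (a,b) = (l1 - a, l2 - b)).
{ unfold Cinv, re, im; simpl. fold Q. f_equal.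
  - apply (Rmult_eq_reg_r Q); [|lra]. field_simplify; [|lra]. nra.
  - apply (Rmult_eq_reg_r Q); [|lra]. field_simplify; [|lra]. nra. }
split; [exact QP|]. split.
- set (q := sqrt Q). assert (Hq : q * q = Q) by (apply sqrt_sqrt; lra).
  assert (q0 : 0 < q) by (apply sqrt_lt_R0; lra).
  assert (q1 : q < 1) by nra.
  assert (lq : 0 < l2 * Q) by (apply Rmult_lt_0_compat; lra).
  assert (bn : b < 0) by nra.
  assert (bb : b * b <= q * q) by (rewrite Hq; unfold Q; nra).
  assert (bq : - b <= q) by nra.
  assert (S1 : l2 * (q*q) <= q * (1 - q*q)) by (rewrite Hq, F2; rewrite <- Hq; nra).
  assert (S2 : l2 * q <= 1 - q*q).
  { apply (Rmult_le_reg_l q); [lra|]. nra. }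
  nra.
- assert (I1 : a / Q = l1 - a).
  { apply (Rmult_eq_reg_r Q); [|lra]. field_simplify; [|lra]. nra. }
  assert (I2 : - b / Q = l2 - b).
  { apply (Rmult_eq_reg_r Q); [|lra]. field_simplify; [|lra]. nra. }
  rewrite I1, I2.
  assert (V1 : (a - (l1 - a))*(a - (l1 - a)) - (b - (l2-b))*(b-(l2-b)) = l1*l1 - l2*l2 - 4) by nra.
  assert (V2 : (a - (l1 - a))*(b - (l2-b)) = l1*l2) by nra.
  set (v1 := a - (l1 - a)) in *. set (v2 := b - (l2 - b)) in *.
  replace ((v1*v1+v2*v2)*(v1*v1+v2*v2)) with ((v1*v1-v2*v2)*(v1*v1-v2*v2) + 4*(v1*v2)*(v1*v2)) by ring.
  rewrite V1, V2. ring.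
Qed.

Lemma abs_re_le z : Rabs (re z) <= Cnorm z.
Proof. unfold Cnorm. rewrite <- sqrt_Rsqr_abs. apply sqrt_le_1_alt. unfold Rsqr. nra. Qed.

Lemma im_lower (K : Cx -> Prop) : Ccompact K -> (forall e, K e -> 0 < im e) ->
  exists m, 0 < m /\ forall e, K e -> m <= im e.
Proof.
intros [HC [Mb HB]] Hpos.
destruct (classic (exists m, 0 < m /\ forall e, K e -> m <= im e)) as [H|H]; auto.
exfalso.
assert (H' : forall m, 0 < m -> exists e, K e /\ im e < m).
{ intros m Hm. apply NNPP. intro C. apply H. exists m. split; auto. intros e Ke.
  apply Rnot_lt_le. intro. apply C. eauto. }
set (B := fun x => forall eps, 0 < eps -> exists z, K z /\ im z < eps /\ re z < x).
assert (Bmono : forall x y, x <= y -> B x -> B y).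
{ intros x y Hxy Bx eps He. destruct (Bx eps He) as [z [? [? ?]]]. exists z. repeat split; auto; lra. }
assert (Mb0 : 0 <= Mb).
{ destruct (H' 1 Rlt_0_1) as [e [Ke _]]. pose proof (HB e Ke). pose proof (abs_re_le e).
  pose proof (Rabs_pos (re e)). lra. }
set (E := fun x => ~ B x).
assert (Eb : bound E).
{ exists (Mb + 1). intros x Ex. apply Rnot_lt_le. intro Hx. apply Ex.
  intros eps He. destruct (H' eps He) as [z [Kz Iz]]. exists z. repeat split; auto.
  pose proof (HB z Kz). pose proof (abs_re_le z). pose proof (Rle_abs (re z)). lra. }
assert (Ene : exists x, E x).
{ exists (- Mb - 1). intro Bx. destruct (Bx 1 Rlt_0_1) as [z [Kz [_ Rz]]].
  pose proof (HB z Kz). pose proof (abs_re_le z). pose proof (Rle_abs (- re z)).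
  rewrite Rabs_Ropp in *. lra. }
destruct (completeness E Eb Ene) as [s [Hub Hlub]].
assert (nK : ~ K (s, 0)). { intro Ks. pose proof (Hpos _ Ks). unfold im in *; simpl in *; lra. }
destruct (HC _ nK) as [eps [Heps Hcl]].
set (d := eps / 4).
assert (Bs : B (s + d)).
{ apply NNPP. intro nB. pose proof (Hub _ nB). unfold d in *; lra. }
assert (nBs : ~ B (s - d)).
{ intro Bsd. assert (is_upper_bound E (s - d)).
  { intros x Ex. apply Rnot_lt_le. intro Hx. apply Ex. apply (Bmono (s - d)); auto; lra. }
  pose proof (Hlub _ H0). unfold d in *; lra. }
assert (Ex0 : exists e0, 0 < e0 /\ forall z, K z -> im z < e0 -> s - d <= re z).
{ apply NNPP. intro C. apply nBs. intros e0 He0. apply NNPP. intro C2. apply C.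
  exists e0. split; auto. intros z Kz Iz. apply Rnot_lt_le. intro Rz. apply C2. eauto. }
destruct Ex0 as [e0 [He0 Hz]].
destruct (Bs (Rmin e0 d)) as [z [Kz [Iz Rz]]].
{ apply Rmin_pos; unfold d; lra. }
assert (I1 : im z < e0) by (pose proof (Rmin_l e0 d); lra).
assert (I2 : im z < d) by (pose proof (Rmin_r e0 d); lra).
pose proof (Hz z Kz I1). pose proof (Hpos z Kz).
apply (Hcl z); auto.
unfold Cnorm, Csub, re, im in *; simpl in *.
rewrite <- (sqrt_square eps) by lra. apply sqrt_lt_1_alt.
unfold d in *. destruct z as [zr zi]; simpl in *. split; [ pose proof (Rle_0_sqr (zr - s)); pose proof (Rle_0_sqr (zi - 0)); unfold Rsqr in *; lra |]. assert ((zr - s)*(zr-s) <= (eps/4)*(eps/4)) by (assert (0 <= (eps/4 - (zr - s))*(eps/4 + (zr-s))) by (apply Rmult_le_pos; lra); nra). assert (zi*zi <= (eps/4)*(eps/4)) by nra. nra.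
Qed.

Lemma sumN_abs_le N f g : (forall j, (j < N)%nat -> Rabs (f j) <= g j) ->
  Rabs (sumN N f) <= sumN N g.
Proof. induction N; intros H; simpl. rewrite Rabs_R0; lra.
eapply Rle_trans. apply Rabs_triang. apply Rplus_le_compat. apply IHN; intros; apply H; lia.
apply H; lia. Qed.

Lemma sumN_mul N f X : sumN N (fun j => f j * X) = sumN N f * X.
Proof. induction N; simpl. ring. rewrite IHN; ring. Qed.

Lemma point_bound (x0 m Mb d2 u : R) (eta : Cx) (k : nat) :
  -2 < x0 < 2 -> 0 < m -> 0 < Mb -> d2 = m / (2 + m) -> 0 < u <= 1 ->
  m <= im eta -> Cnorm eta <= Mb ->
  Rabs (im (Cdiv (Cpow (omega (Cadd (x0,0) (Cscal u eta))) k)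
     (Csub (omega (Cadd (x0,0) (Cscal u eta))) (Cinv (omega (Cadd (x0,0) (Cscal u eta)))))))
  <= / sqrt ((4 - x0*x0) * (m*m) / (Mb*Mb)) * exp (- d2 * u) ^ k.
Proof.
intros Hx Hm HMb Hd2 Hu Him Hn.
destruct eta as [xi ze]. unfold Cnorm, re, im in Him, Hn; simpl in Him, Hn.
set (l := Cadd (x0,0) (Cscal u (xi,ze))).
assert (Hl : 0 < im l).
{ unfold l, Cadd, Cscal, re, im; simpl. nra. }
destruct (omega_prop l Hl) as [Hq HQ].
set (w := omega l) in *.
destruct (quad_facts l w Hq Hl HQ) as [QP [Hs HV]].
set (v := Csub w (Cinv w)) in *.
set (D := (4 - x0*x0) * (m*m) / (Mb*Mb)).
set (C := xi*xi + ze*ze) in *.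
assert (C0 : 0 < C) by (unfold C; nra).
assert (CM : C <= Mb*Mb).
{ rewrite <- (sqrt_sqrt C) by lra. apply Rmult_le_compat; try apply sqrt_pos; auto. }
assert (L1 : re l = x0 + u*xi) by (unfold l, Cadd, Cscal, re; simpl; ring).
assert (L2 : im l = u*ze) by (unfold l, Cadd, Cscal, im; simpl; ring).
rewrite L1, L2 in HV. rewrite L2 in Hs.
assert (P1 : ((x0+u*xi - 2)*(x0+u*xi-2) + u*ze*(u*ze)) * C >= (2-x0)*(2-x0)*(ze*ze)).
{ assert (((x0+u*xi - 2)*(x0+u*xi-2) + u*ze*(u*ze)) * C - (2-x0)*(2-x0)*(ze*ze)
     = ((2-x0)*xi - u*C)*((2-x0)*xi - u*C)) by (unfold C; ring). pose proof (Rle_0_sqr ((2-x0)*xi - u*C)); unfold Rsqr in *; lra. }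
assert (P2 : ((x0+u*xi + 2)*(x0+u*xi+2) + u*ze*(u*ze)) * C >= (2+x0)*(2+x0)*(ze*ze)).
{ assert (((x0+u*xi + 2)*(x0+u*xi+2) + u*ze*(u*ze)) * C - (2+x0)*(2+x0)*(ze*ze)
     = ((2+x0)*xi + u*C)*((2+x0)*xi + u*C)) by (unfold C; ring). pose proof (Rle_0_sqr ((2+x0)*xi + u*C)); unfold Rsqr in *; lra. }
set (A1 := (x0+u*xi - 2)*(x0+u*xi-2) + u*ze*(u*ze)) in *.
set (A2 := (x0+u*xi + 2)*(x0+u*xi+2) + u*ze*(u*ze)) in *.
assert (Pr : A1 * A2 * (C*C) >= ((4-x0*x0)*(m*m))*((4-x0*x0)*(m*m))).
{ assert (Z1 : (2-x0)*(2-x0)*(ze*ze) >= (2-x0)*(2-x0)*(m*m)).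
  { apply Rle_ge, Rmult_le_compat_l. nra. nra. }
  assert (Z2 : (2+x0)*(2+x0)*(ze*ze) >= (2+x0)*(2+x0)*(m*m)).
  { apply Rle_ge, Rmult_le_compat_l. nra. nra. }
  replace (A1 * A2 * (C*C)) with ((A1*C)*(A2*C)) by ring.
  replace (((4-x0*x0)*(m*m))*((4-x0*x0)*(m*m))) with (((2-x0)*(2-x0)*(m*m))*((2+x0)*(2+x0)*(m*m))) by ring.
  apply Rle_ge, Rmult_le_compat; [apply Rmult_le_pos; nra | apply Rmult_le_pos; nra | lra | lra]. }
assert (D0 : 0 < D).
{ unfold D. apply Rdiv_lt_0_compat; [|nra]. apply Rmult_lt_0_compat; nra. }
assert (ND : D <= N2 v).
{ assert (DD : D * D * (C*C) <= N2 v * N2 v * (C*C)).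
  { rewrite HV. apply Rge_le. eapply Rge_trans. exact Pr.
    apply Rle_ge. unfold D.
    replace ((4 - x0 * x0) * (m * m) / (Mb * Mb) * ((4 - x0 * x0) * (m * m) / (Mb * Mb)) * (C * C))
      with (((4-x0*x0)*(m*m))*((4-x0*x0)*(m*m)) * ((C / (Mb*Mb)) * (C/(Mb*Mb)))) by (field; nra).
    rewrite <- (Rmult_1_r (((4-x0*x0)*(m*m))*((4-x0*x0)*(m*m)))) at 2.
    apply Rmult_le_compat_l. apply Rle_0_sqr.
    assert (C / (Mb*Mb) <= 1). { apply (Rmult_le_reg_r (Mb*Mb)); [nra|]. field_simplify; nra. }
    assert (0 <= C / (Mb*Mb)) by (apply Rmult_le_pos; [lra| left; apply Rinv_0_lt_compat; nra]).
    nra. }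
  assert (DD' : D * D <= N2 v * N2 v).
  { apply (Rmult_le_reg_r (C*C)); nra. }
  pose proof (N2_ge0 v). nra. }
set (e := exp (- d2 * u)).
assert (E0 : 0 < e) by apply exp_pos.
assert (QE : N2 w <= e * e).
{ set (q := sqrt (N2 w)) in *.
  assert (q0 : 0 <= q) by apply sqrt_pos.
  assert (Hqq : q * q = N2 w) by (apply sqrt_sqrt; lra).
  assert (qe : q <= e).
  { assert (e1 : 1 - d2*u <= e). { unfold e. pose proof (exp_ineq1_le (-d2*u)). lra. }
    assert (d2p : 0 < d2) by (rewrite Hd2; apply Rdiv_lt_0_compat; lra).
    assert (d2m : d2 * (2 + m) = m) by (rewrite Hd2; field; lra).
    assert (q * (2 + u*m) <= 2).
    { eapply Rle_trans; [|exact Hs]. apply Rmult_le_compat_l; nra. }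
    assert (2 <= (1 - d2*u) * (2 + u*m)).
    { assert (X : (1 - d2*u) * (2 + u*m) - 2 = u * (d2*m*(1-u))) by (replace ((1 - d2*u) * (2 + u*m) - 2) with (u * (d2*m*(1-u)) + u*(m - d2*(2+m))) by ring; rewrite d2m; ring).
      assert (0 <= u * (d2*m*(1-u))) by (apply Rmult_le_pos; [lra|]; apply Rmult_le_pos; [apply Rmult_le_pos|]; lra).
      lra. }
    assert (q <= 1 - d2*u). { apply (Rmult_le_reg_r (2+u*m)). nra. lra. }
    lra. }
  rewrite <- Hqq. apply Rmult_le_compat; auto. }
unfold Cdiv.
eapply Rle_trans. apply im_le.
rewrite N2_mul, N2_pow, N2_inv by lra.
set (E := e ^ k).
assert (E0' : 0 < E) by (apply pow_lt; auto).
assert (QK : N2 w ^ k <= E * E).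
{ unfold E. rewrite <- Rpow_mult_distr. apply pow_incr. split; [lra|auto]. }
assert (sD : sqrt D * sqrt D = D) by (apply sqrt_sqrt; lra).
assert (sD0 : 0 < sqrt D) by (apply sqrt_lt_R0; auto).
rewrite <- (sqrt_square (/ sqrt D * E)).
2: { apply Rmult_le_pos; [left; apply Rinv_0_lt_compat|]; lra. }
apply sqrt_le_1_alt.
replace (/ sqrt D * E * (/ sqrt D * E)) with ((E*E) * / D).
2: { rewrite <- sD at 1. field. lra. }
apply Rmult_le_compat.
- apply pow_le; lra.
- left; apply Rinv_0_lt_compat; lra.
- exact QK.
- apply Rinv_le_contravar; lra.
Qed.

Theorem lemma4p1 (x0 alpha : R) (K : Cx -> Prop) :
  -2 < x0 < 2 -> 0 < alpha < 1 -> Ccompact K ->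
  (forall e, K e -> 0 < im e) ->
  exists d1 d2 : R, 0 < d1 /\ 0 < d2 /\
    forall (n N : nat) (c : nat -> R) (eta : nat -> Cx),
      (1 <= n)%nat ->
      (forall j, (j < N)%nat -> K (eta j)) ->
      forall k : Z,
        Rabs (phi_coef x0 alpha n N c eta k) <=
        d1 / Rpower (INR n) alpha * sumN N (fun j => Rabs (c j)) *
        exp (- d2 * IZR (Z.abs k) / Rpower (INR n) alpha).
Proof.
intros Hx Ha HK Hpos.
destruct (im_lower K HK Hpos) as [m [Hm Hmin]].
destruct HK as [_ [Mb0 HMb]].
set (Mb := Rabs Mb0 + 1).
assert (HMb0 : 0 < Mb) by (unfold Mb; pose proof (Rabs_pos Mb0); lra).
set (D := (4 - x0*x0) * (m*m) / (Mb*Mb)).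
assert (D0 : 0 < D).
{ unfold D. apply Rdiv_lt_0_compat; [|nra]. apply Rmult_lt_0_compat; nra. }
exists (/ sqrt D), (m / (2 + m)). split; [apply Rinv_0_lt_compat, sqrt_lt_R0; auto|].
split; [apply Rdiv_lt_0_compat; lra|].
intros n N c eta Hn HN k.
set (P := Rpower (INR n) alpha).
assert (P1 : 1 <= P).
{ unfold P. assert (1 <= INR n) by (replace 1 with (INR 1) by reflexivity; apply le_INR; auto).
  rewrite <- (Rpower_O (INR n)) by lra. apply Rle_Rpower; lra. }
set (u := / P).
assert (Hu : 0 < u <= 1).
{ unfold u. split. apply Rinv_0_lt_compat; lra.
  rewrite <- Rinv_1. apply Rinv_le_contravar; lra. }
set (E := exp (- (m / (2+m)) * u) ^ Z.abs_nat k).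
assert (Ee : exp (- (m / (2+m)) * IZR (Z.abs k) / P) = E).
{ unfold E. rewrite exp_pow_nat. f_equal.
  rewrite <- Nat2Z.inj_abs_nat, <- INR_IZR_INZ. unfold u, Rdiv. ring. }
rewrite Ee.
assert (E0 : 0 <= E) by (unfold E; apply pow_le; left; apply exp_pos).
unfold phi_coef. fold P. rewrite Rabs_mult, Rabs_right.
2: { apply Rle_ge; left; apply Rinv_0_lt_compat; lra. }
replace (/ sqrt D / P * sumN N (fun j => Rabs (c j)) * E)
  with (/ P * sumN N (fun j => Rabs (c j) * (/ sqrt D * E))).
2: { rewrite sumN_mul. unfold Rdiv. ring. }
apply Rmult_le_compat_l; [left; apply Rinv_0_lt_compat; lra|].
apply sumN_abs_le. intros j Hj.
rewrite Rabs_mult. apply Rmult_le_compat_l; [apply Rabs_pos|].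
pose proof (Hmin _ (HN j Hj)) as Hm1.
assert (Hn1 : Cnorm (eta j) <= Mb).
{ pose proof (HMb _ (HN j Hj)). unfold Mb. pose proof (Rle_abs Mb0). lra. }
exact (point_bound x0 m Mb (m/(2+m)) u (eta j) (Z.abs_nat k) Hx Hm HMb0 eq_refl Hu Hm1 Hn1).
Qed.
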